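(* Let $\Omega := \{0,1\}^{\mathbb{Z}}$ and let $\tau:\Omega\to\Omega$ be the shift defined by $(\tau\omega)(x) := \omega(x-1)$ for $\omega\in\Omega$, $x\in\mathbb{Z}$; for $A\subseteq\Omega$ write $\tau A := \{\tau\omega : \omega\in A\}$. Let $\mathcal{F}$ be a $\sigma$-algebra on $\Omega$ that contains all singletons and is closed under the shift (that is, $A\in\mathcal{F}$ implies $\tau A\in\mathcal{F}$). If there exists a measure $\mu$ on $\mathcal{F}$ that is shift-invariant (that is, $\mu=\mu\circ\tau$), satisfies $\mu(\Omega)\in(0,\infty)$, and satisfies $\mu(\{\omega\})=0$ for all $\omega\in\Omega$, then $\mathcal{F}$ does not contain all subsets of $\Omega$.
   Context: The axiom of choice (in the form of the well-ordering principle) is assumed. *)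

(* Defs.v *)
From HB Require Import structures.
From mathcomp Require Import all_boot all_order all_algebra.
From mathcomp Require Import all_classical all_reals.
From mathcomp Require Import ereal topology normedtype sequences measure.
Set Implicit Arguments. Unset Strict Implicit. Unset Printing Implicit Defensive.
Import Order.TTheory GRing.Theory Num.Theory.
Local Open Scope classical_set_scope.
Local Open Scope ring_scope.

Definition Omega := int -> bool.

Definition tau (w : Omega) : Omega := fun x => w (x - 1).

(* mu is a (nonnegative, extended-real valued, countably additive) measure
   on the sigma-algebra F (values outside F are irrelevant). *)
Definition is_measure_on (R : realType) (F : set (set Omega))
    (mu : set Omega -> \bar R) : Prop :=
  [/\ mu set0 = 0%E,
      (forall A, F A -> (0 <= mu A)%E) &
      (forall A : (set Omega)^nat, (forall n, F (A n)) -> trivIset setT A ->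
        (fun n => \sum_(0 <= i < n) mu (A i))%E @ \oo --> mu (\bigcup_n A n))].

(* Main.v *)
Require Import Defs.
From HB Require Import structures.
From mathcomp Require Import all_boot all_order all_algebra.
From mathcomp Require Import all_classical all_reals.
From mathcomp Require Import ereal topology normedtype sequences measure.
From mathcomp Require Import zify ring.
Import Order.TTheory GRing.Theory Num.Theory.
Local Open Scope classical_set_scope.
Local Open Scope ring_scope.

Lemma ecvg_uniq (R : realType) (u : nat -> \bar R) (a b : \bar R) :
  u @ \oo --> a -> u @ \oo --> b -> a = b.
Proof. move=> ha hb; exact: (@cvg_unique _ (@ereal_hausdorff R) _ _ a b ha hb). Qed.

Definition tz (n : int) (w : Omega) : Omega := fun x => w (x - n).

Lemma tzD a b w : tz a (tz b w) = tz (a + b) w.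
Proof. by apply: funext => x; rewrite /tz; congr w; ring. Qed.

Lemma tz0 : tz 0 = id.
Proof. by apply: funext => w; apply: funext => x; rewrite /tz subr0. Qed.

Lemma tzK n w : tz (- n) (tz n w) = w.
Proof. by rewrite tzD addNr tz0. Qed.

Lemma tzK' n w : tz n (tz (- n) w) = w.
Proof. by rewrite tzD addrN tz0. Qed.

Lemma tau_tz : tau = tz 1.
Proof. by []. Qed.

Definition periodic (w : Omega) := exists n : int, n != 0 /\ tz n w = w.

Lemma periodic_tz k w : periodic (tz k w) -> periodic w.
Proof.
move=> [n [n0 h]]; exists n; split => //.
have e1 : tz n w = tz (- k) (tz n (tz k w)) by rewrite !tzD -addrA (addrC n) addKr.
by rewrite e1 h tzK.
Qed.

Lemma periodic_shape w : periodic w ->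
  exists p : nat, (0 < p)%N /\ forall x, w (x - p%:Z) = w x.
Proof.
move=> [n [n0 h]].
have hp : tz `|n|%N w = w.
  case: (lerP 0 n) => hn.
    by rewrite gez0_abs.
  by rewrite ltz0_abs // -{1}h tzK.
exists `|n|%N; split; first by rewrite absz_gt0.
by move=> x; rewrite -{2}hp.
Qed.

Definition perext (s : seq bool) : Omega :=
  fun x => nth false s `|(x %% (size s)%:Z)%Z|%N.

Lemma periodic_perext w : periodic w -> exists s, w = perext s.
Proof.
move=> /periodic_shape [p [p0 hp]].
have hn : forall (k : nat) x, w (x - (k%:Z * p%:Z)) = w x.
  elim=> [|k IH] x; first by rewrite mul0r subr0.
  by rewrite -[in RHS](IH x) -[in RHS]hp; congr w; rewrite -addn1 PoszD; ring.
have hz : forall (q : int) x, w (x - q * p%:Z) = w x.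
  case=> [k|k] x; first exact: hn.
  have e : x = (x - Negz k * p%:Z) - k.+1%:Z * p%:Z by rewrite NegzE; ring.
  by rewrite {2}e hn.
exists (mkseq (fun i => w i%:Z) p); apply: funext => x.
rewrite /perext size_mkseq.
have p0' : (p%:Z != 0) by rewrite eqz_nat -lt0n.
have ge0 := modz_ge0 x p0'.
have lt : ((x %% p%:Z)%Z < p%:Z) by apply: ltz_pmod; rewrite ltz_nat.
rewrite nth_mkseq; last by rewrite -ltz_nat gez0_abs.
rewrite gez0_abs // -[in LHS](hz (x %/ p%:Z)%Z x); congr w.
Qed.

Definition enum_per (n : nat) : Omega :=
  if @unpickle (seq bool) n is Some s then perext s else fun _ => false.

Lemma periodic_range w : periodic w -> range enum_per w.
Proof.
move=> /periodic_perext [s ->]; exists (pickle s) => //.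
by rewrite /enum_per pickleK.
Qed.
Lemma countable_null (R : realType) (mu : set Omega -> \bar R)
  (F : set (set Omega)) : is_measure_on F mu -> (forall A, F A) ->
  (forall w, mu [set w] = 0%E) ->
  forall (e : nat -> Omega) C, C `<=` range e -> mu C = 0%E.
Proof.
move=> [mu0 _ mu_add] allF mu1 e C Ce.
pose B n := (C `&` [set e n]) `\` (e @` [set k | (k < n)%N]).
have tB : trivIset setT B.
  move=> i j _ _ [w [[[_ ei] ni] [[_ ej] nj]]].
  case: (ltngtP i j) => // hij.
  - by exfalso; apply: nj; exists i.
  - by exfalso; apply: ni; exists j.
have uB : \bigcup_n B n = C.
  apply/seteqP; split=> w.
    by move=> [n _ [[]]].
  move=> Cw; have [n0 _ en0] := Ce w Cw.
  have ex : exists n, `[< e n = w >] by exists n0; apply/asboolP.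
  case: (ex_minnP ex) => n /asboolP en hmin.
  exists n => //; split; first by split.
  move=> [k /= kn ek]; have := hmin k (introT (asboolP _) ek).
  by rewrite leqNgt kn.
have mB : forall n, mu (B n) = 0%E.
  move=> n; case: (pselect (B n (e n))) => h.
    suff -> : B n = [set e n] by [].
    apply/seteqP; split=> w; first by move=> [[_ ->]].
    by move=> ->.
  suff -> : B n = set0 by [].
  apply/seteqP; split=> w; last by [].
  by move=> hw; apply: h; case: hw => [[Cw /= ew] nw]; rewrite -ew.
have := mu_add B (fun n => allF _) tB; rewrite uB.
have -> : (fun n => \sum_(0 <= i < n) mu (B i))%E = fun _ => 0%E.
  by apply: funext => n; rewrite big1.
move=> h; apply: (@ecvg_uniq R (fun _ => 0%E) (mu C) 0%E h); exact: cvg_cst.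
Qed.

Definition gZ (k : nat) : int := if odd k then - (k./2.+1)%:Z else (k./2)%:Z.

Lemma gZ_inj : injective gZ.
Proof.
move=> i j; rewrite /gZ.
have hi := odd_double_half i; have hj := odd_double_half j.
case: (odd i) hi; case: (odd j) hj => /= hj hi h.
- have : (i./2 = j./2) by lia.
  lia.
- lia.
- lia.
- have : (i./2 = j./2) by lia.
  lia.
Qed.

Lemma gZ_surj n : exists k, gZ k = n.
Proof.
case: n => k.
  by exists k.*2; rewrite /gZ odd_double doubleK.
exists k.*2.+1; rewrite /gZ /= odd_double /= uphalf_double NegzE //.
Qed.

Theorem theorem1 (R : realType) (F : set (set Omega)) :
  sigma_algebra setT F ->
  (forall w : Omega, F [set w]) ->
  (forall A, F A -> F (tau @` A)) ->
  (exists mu : set Omega -> \bar R,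
     [/\ is_measure_on F mu,
         (forall A, F A -> mu (tau @` A) = mu A),
         (0 < mu setT)%E, (mu setT < +oo)%E &
         (forall w : Omega, mu [set w] = 0%E)]) ->
  ~ (forall A : set Omega, F A).
Proof.
move=> _ _ _ [mu [hmu muinv mupos mufin mu1]] allF.
have [mu0 mu_ge0 mu_add] := hmu.
have mu_tzn : forall (k : nat) A, mu (tz k%:Z @` A) = mu A.
  elim=> [|k IH] A; first by rewrite tz0 image_id.
  have -> : tz k.+1%:Z @` A = tau @` (tz k @` A).
    rewrite image_comp; congr image; apply: funext => w /=.
    by rewrite tau_tz tzD intS.
  by rewrite muinv ?IH.
have mu_tz : forall n A, mu (tz n @` A) = mu A.
  case=> k A; first exact: mu_tzn.
  rewrite -(mu_tzn k.+1 (tz (Negz k) @` A)) image_comp.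
  have -> : tz k.+1%:Z \o tz (Negz k) = id.
    by apply: funext => w /=; rewrite NegzE tzK'.
  by rewrite image_id.
pose P := [set w | periodic w].
have muP : mu P = 0%E.
  apply: (@countable_null R mu F hmu allF mu1 enum_per P) => w; exact: periodic_range.
pose orb w := [set w' | exists n, w' = tz n w].
pose rep w := xget (fun _ => false) (orb w).
have rep_orb : forall w, orb w (rep w).
  by move=> w; apply: xgetPex; exists w; exists 0; rewrite tz0.
have orb_rep : forall w w', orb w w' -> rep w = rep w'.
  move=> w w' [n ->]; rewrite /rep; congr xget; apply/seteqP; split=> u [m ->].
    by exists (m - n); rewrite tzD subrK.
  by exists (m + n); rewrite tzD.
pose V := [set v | ~ periodic v /\ rep v = v].
pose A k := if k is k'.+1 then tz (gZ k') @` V else P.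
have tA : trivIset setT A.
  move=> i j _ _ [w [Ai Aj]].
  case: i Ai => [|i] Ai; case: j Aj => [|j] Aj //=.
  - exfalso; case: Aj => v [nv _] e; apply: nv; apply: (periodic_tz (gZ j)).
    by rewrite e.
  - exfalso; case: Ai => v [nv _] e; apply: nv; apply: (periodic_tz (gZ i)).
    by rewrite e.
  case: Ai => v [nv rv] e1; case: Aj => v' [nv' rv'] e2.
  have := tzK (gZ j) v'; rewrite e2 -e1 tzD => hv'.
  have ev : v = v'.
    by rewrite -rv -rv'; apply: orb_rep; exists (- gZ j + gZ i); rewrite hv'.
  subst v'.
  case: (eqVneq (gZ i) (gZ j)) => [/gZ_inj -> //| ne].
  exfalso; apply: nv; exists (- gZ j + gZ i); split => //.
  by rewrite addrC subr_eq0.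
have uA : \bigcup_n A n = setT.
  apply/seteqP; split=> // w _.
  case: (pselect (periodic w)) => pw; first by exists 0%N.
  have [m hm] := rep_orb w.
  have [k gk] := gZ_surj (- m).
  exists k.+1 => //=; exists (rep w).
    split.
      by move=> pr; apply: pw; apply: (periodic_tz m); rewrite -hm.
    exact: esym (orb_rep _ _ (rep_orb w)).
  by rewrite gk hm tzK.
have mAS : forall k, mu (A k.+1) = mu V by move=> k; exact: mu_tz.
pose S n := (\sum_(0 <= i < n) mu (A i))%E.
have hS : forall n, S n.+1 = (mu V *+ n)%E.
  elim=> [|n IH]; first by rewrite /S big_nat1 /= muP.
  by rewrite /S big_nat_recr // -/(S n.+1) IH mAS muleS addeC.
have conv := mu_add A (fun _ => allF _) tA; rewrite uA in conv.
have homo : {homo S : n m / (n <= m)%N >-> (n <= m)%E}.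
  by apply: lee_sum_nneg_natr => n _ _; exact: mu_ge0.
have hsup : mu setT = ereal_sup (range S).
  exact: (@ecvg_uniq R S _ _ conv (ereal_nondecreasing_cvgn homo)).
have bound : forall n, (mu V *+ n <= mu setT)%E.
  move=> n; have : (S n.+1 <= mu setT)%E.
    by rewrite hsup; apply: ereal_sup_ubound; exists n.+1.
  by rewrite hS.
have mV0 : (0 <= mu V)%E := mu_ge0 _ (allF _).
case: (eqVneq (mu V) 0%E) => h0.
  have : (mu setT <= 0)%E.
    rewrite hsup; apply: ge_ereal_sup => _ [n _ <-]; case: n => [|n].
      by rewrite /S big_mkord big_ord0.
    by rewrite hS h0 -mule_natl mule0.
  by rewrite leNgt mupos.
move: bound mV0 h0; case: (mu V) => [r| |] //; last first.
  move=> hb _ _; have := hb 1%N; rewrite enatmul_pinfty.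
  by rewrite leNgt mufin.
move=> hb r0 rn0.
have rpos : 0 < r by rewrite lt_neqAle eq_sym -lee_fin r0 andbT; move: rn0; apply: contra => /eqP ->.
move: mupos mufin hb; case: (mu setT) => [c| |] // c0 _ hb.
have cr0 : 0 <= c / r by rewrite divr_ge0 // ?ltW // -lte_fin.
have h1 := archi_boundP cr0.
have := hb (Num.Def.archi_bound (c / r)); rewrite -EFin_natmul lee_fin -mulr_natr.
move: h1; rewrite ltr_pdivrMr // => h1 h2.
by rewrite mulrC in h2; move: (lt_le_trans h1 h2); rewrite ltxx.
Qed.
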